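(* Let $(S,\lambda_S^\bullet,\mu_S^{(0)})$, $(G,\lambda_G^\bullet,\mu_G^{(0)})$, $(T,\lambda_T^\bullet,\mu_T^{(0)})$ be Haar groupoids, $p:S\to G$, $q:T\to G$ homomorphisms of Haar groupoids, $P$ their weak pullback, and $\lambda_P^{(s,g,t)}=\lambda_S^s\times\delta_g\times\lambda_T^t$ for $(s,g,t)\in P^{(0)}$. Then $\lambda_P^\bullet$ is left invariant: for every $x\in P$ and every Borel $E\subseteq P$, $\lambda_P^{d_P(x)}(E)=\lambda_P^{r_P(x)}\big(x\cdot(E\cap P^{d_P(x)})\big)$, where $P^{v}=r_P^{-1}(v)$.
   Context: For a groupoid $G$: unit space $G^{(0)}$, range/source $r,d$, $G^u=r^{-1}(u)$. A continuous left Haar system on a groupoid $G$ is a family $\{\lambda^u\}_{u\in G^{(0)}}$ of positive Borel measures on $G$, $\lambda^u$ concentrated on $G^u$, which is continuous ($u\mapsto\int f\,d\lambda^u$ continuous for every continuous compactly supported $f\ge0$), left invariant ($\lambda^{d(x)}(E)=\lambda^{r(x)}(x\cdot(E\cap G^{d(x)}))$) and positive on open sets ($\lambda^u(A)>0$ for open $A$ meeting $G^u$). A Haar groupoid $(G,\lambda^\bullet,\mu^{(0)})$ is a second countable, locally compact, Hausdorff topological groupoid with a continuous left Haar system and a non-zero Radon measure $\mu^{(0)}$ on $G^{(0)}$ that is quasi-invariant (the induced measure $\mu(E)=\int\lambda^u(E)d\mu^{(0)}(u)$ and $\mu^{-1}(E)=\mu(E^{-1})$ are mutually absolutely continuous).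 A homomorphism of Haar groupoids is a continuous groupoid homomorphism $p$ with $p_*\mu\sim\nu$ for the induced measures. The weak pullback is $P=\{(s,g,t)\in S\times G\times T: r_G(g)=r_G(p(s)),\ d_G(g)=r_G(q(t))\}$ with subspace topology and groupoid operations: $((s,g,t),(\sigma,h,\tau))$ composable iff $r_S(\sigma)=d_S(s)$, $r_T(\tau)=d_T(t)$, $h=p(s)^{-1}gq(t)$, product $(s\sigma,g,t\tau)$; inverse $(s^{-1},p(s)^{-1}gq(t),t^{-1})$; $r_P(s,g,t)=(r_S(s),g,r_T(t))$, $d_P(s,g,t)=(d_S(s),p(s)^{-1}gq(t),d_T(t))$; $P^{(0)}=\{(s,g,t):s\in S^{(0)},t\in T^{(0)},r_G(g)=p(s),d_G(g)=q(t)\}$. *)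

(* Defs.v *)
From HB Require Import structures.
From mathcomp Require Import all_boot all_order all_algebra.
From mathcomp Require Import all_classical all_reals all_analysis.
Set Implicit Arguments. Unset Strict Implicit. Unset Printing Implicit Defensive.
Import Order.TTheory GRing.Theory Num.Theory.
Import numFieldNormedType.Exports.
HB.saturate prod.

Local Open Scope classical_set_scope.
Local Open Scope ring_scope.

Notation borel X := (g_sigma_algebraType (@open X)).
Definition borel_set (X : ptopologicalType) (A : set X) : Prop :=
  @measurable _ (borel X) (A : set (borel X)).

(* A groupoid whose unit space is a subset of the carrier: range r, source d,
   inverse, and a (total) multiplication only meaningful on composable pairs
   (x, y) with d x = r y. *)
Record groupoid_data (X : Type) := GroupoidData {
  gr : X -> X; gd : X -> X; ginv : X -> X; gmul : X -> X -> X }.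

Section Groupoid.
Context {X : Type} (G : groupoid_data X).

Definition units : set X := [set u | gr G u = u].
Definition rfiber (u : X) : set X := [set x | gr G x = u].
Definition composable (x y : X) : Prop := gd G x = gr G y.

Definition is_groupoid_on (C : set X) : Prop :=
  (forall x, C x -> C (gr G x) /\ C (gd G x) /\ C (ginv G x)) /\
  (forall x y, C x -> C y -> composable x y -> C (gmul G x y)) /\
  [/\ (forall x, C x -> gr G (gr G x) = gr G x /\ gr G (gd G x) = gd G x
                      /\ gd G (gr G x) = gr G x /\ gd G (gd G x) = gd G x),
      (forall x y, C x -> C y -> composable x y ->
          gr G (gmul G x y) = gr G x /\ gd G (gmul G x y) = gd G y),
      (forall x y z, C x -> C y -> C z -> composable x y -> composable y z ->
          gmul G (gmul G x y) z = gmul G x (gmul G y z)),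
      (forall x, C x -> gmul G (gr G x) x = x /\ gmul G x (gd G x) = x) &
      (forall x, C x -> gr G (ginv G x) = gd G x /\ gd G (ginv G x) = gr G x
          /\ gmul G x (ginv G x) = gr G x /\ gmul G (ginv G x) x = gd G x)].

Definition is_groupoid : Prop := is_groupoid_on setT.
End Groupoid.

Definition is_topological_groupoid (X : ptopologicalType) (G : groupoid_data X)
  : Prop :=
  is_groupoid G /\
  {within [set xy : X * X | composable G xy.1 xy.2],
     continuous (fun xy : X * X => gmul G xy.1 xy.2)} /\
  continuous (ginv G).

Section Haar.
Context {R : realType} {X : ptopologicalType} (G : groupoid_data X).
Local Open Scope ereal_scope.

Definition is_left_haar_system (lam : X -> {measure set (borel X) -> \bar R})
  : Prop :=
  [/\
      (forall u, units G u -> lam u (~` rfiber G u) = 0),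
      (forall f : X -> R, continuous f ->
          compact (closure [set x | f x != 0%R]) -> (forall x, (0 <= f x)%R) ->
          (forall u, units G u -> \int[lam u]_x (f x)%:E \is a fin_num) /\
          {within units G, continuous
             (fun u => fine (\int[lam u]_x (f x)%:E))}),
      (forall (x : X) (E : set X), borel_set E ->
          lam (gd G x) E =
          lam (gr G x) (gmul G x @` (E `&` rfiber G (gd G x)))) &
      (forall u (A : set X), units G u -> open A ->
          A `&` rfiber G u !=set0 -> 0 < lam u A)].

(* Radon measure on the subspace A (represented as a Borel measure on X
   concentrated on A): finite on compacts, outer regular on Borel sets,
   inner regular on open sets (opens of A are the traces U `&` A). *)
Definition radon_on (A : set X) (mu : set X -> \bar R) : Prop :=
  [/\ mu (~` A) = 0,
      (forall K, compact K -> K `<=` A -> mu K < +oo),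
      (forall E, borel_set E -> E `<=` A ->
          mu E = ereal_inf [set mu (U `&` A) | U in [set U | open U /\ E `<=` U]]) &
      (forall U, open U ->
          mu (U `&` A) = ereal_sup [set mu K | K in [set K | compact K /\ K `<=` U `&` A]])].

Definition induced_measure (lam : X -> {measure set (borel X) -> \bar R})
  (mu0 : {measure set (borel X) -> \bar R}) (E : set X) : \bar R :=
  \int[mu0]_(u in units G) lam u E.

Definition quasi_invariant (lam : X -> {measure set (borel X) -> \bar R})
  (mu0 : {measure set (borel X) -> \bar R}) : Prop :=
  forall E : set X, borel_set E ->
    (induced_measure lam mu0 E = 0 <-> induced_measure lam mu0 (ginv G @` E) = 0).

Definition haar_groupoid (lam : X -> {measure set (borel X) -> \bar R})
  (mu0 : {measure set (borel X) -> \bar R}) : Prop :=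
  [/\ @second_countable X, locally_compact [set: X], hausdorff_space X &
      is_topological_groupoid G] /\
  [/\ is_left_haar_system lam,
      mu0 setT <> 0, radon_on (units G) mu0 & quasi_invariant lam mu0].
End Haar.

(* Homomorphism of Haar groupoids: continuous groupoid homomorphism p with
   p_* mu_S ~ mu_G (mutual absolute continuity of induced measures). *)
Definition haar_hom {R : realType} {X Y : ptopologicalType}
  (S : groupoid_data X) (lamS : X -> {measure set (borel X) -> \bar R})
  (muS : {measure set (borel X) -> \bar R})
  (G : groupoid_data Y) (lamG : Y -> {measure set (borel Y) -> \bar R})
  (muG : {measure set (borel Y) -> \bar R}) (p : X -> Y) : Prop :=
  [/\ continuous p,
      (forall x y, composable S x y ->
         composable G (p x) (p y) /\ p (gmul S x y) = gmul G (p x) (p y)) &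
      (forall E : set Y, borel_set E ->
         (induced_measure S lamS muS (p @^-1` E) = 0%E <->
          induced_measure G lamG muG E = 0%E))].

Section WeakPullback.
Context {S G T : ptopologicalType} (gS : groupoid_data S) (gG : groupoid_data G)
  (gT : groupoid_data T) (p : S -> G) (q : T -> G).

Definition wp_set : set (S * G * T) :=
  [set z | gr gG z.1.2 = gr gG (p z.1.1) /\ gd gG z.1.2 = gr gG (q z.2)].

Definition wp_mid (z : S * G * T) : G :=
  gmul gG (gmul gG (ginv gG (p z.1.1)) z.1.2) (q z.2).

Definition wp_groupoid : groupoid_data (S * G * T) := GroupoidData
  (fun z => (gr gS z.1.1, z.1.2, gr gT z.2))
  (fun z => (gd gS z.1.1, wp_mid z, gd gT z.2))
  (fun z => (ginv gS z.1.1, wp_mid z, ginv gT z.2))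
  (fun z w => (gmul gS z.1.1 w.1.1, z.1.2, gmul gT z.2 w.2)).

Definition wp_rfiber (v : S * G * T) : set (S * G * T) :=
  wp_set `&` rfiber wp_groupoid v.

(* lam_P^{(s,g,t)} = lam_S^s x delta_g x lam_T^t, as the iterated integral
   of the indicator (the definition of the product measure). *)
Definition wp_lam {R : realType} (lamS : S -> {measure set (borel S) -> \bar R})
  (lamT : T -> {measure set (borel T) -> \bar R})
  (v : S * G * T) (E : set (S * G * T)) : \bar R :=
  (\int[lamS v.1.1]_a \int[@dirac _ (borel G) v.1.2 R]_h
      \int[lamT v.2]_b (\1_E ((a : S), (h : G), (b : T)) : R)%:E)%E.
End WeakPullback.

(* Main.v *)
Require Import Defs.
From HB Require Import structures.
From mathcomp Require Import all_boot all_order all_algebra.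
From mathcomp Require Import all_classical all_reals all_analysis.
Import Order.TTheory GRing.Theory Num.Theory.
Import HBNNSimple numFieldNormedType.Exports.
Local Open Scope classical_set_scope.
Local Open Scope ring_scope.

Section h2.
Context {d} {X : measurableType d} {R : realType} (F : set X) (mF : measurable F)
  (L : X -> X) (mL : measurable_fun F L) (h : {nnsfun X >-> R}).
Definition h2 : X -> R := ((h : X -> R) \o L) \_ F.
Lemma h2E x : h2 x = if x \in F then h (L x) else 0.
Proof. by rewrite /h2 patchE. Qed.
Lemma h2_mfun : measurable_fun setT h2.
Proof.
apply/(measurable_restrictT _ mF).
exact: measurableT_comp.
Qed.
HB.instance Definition _ := isMeasurableFun.Build _ _ _ _ h2 h2_mfun.
Lemma h2_fin : finite_set (range h2).
Proof.
apply: (@sub_finite_set _ _ (0 |` range h)); last first.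
  by rewrite finite_setU; split; [exact: finite_set1|exact: fimfunP].
move=> _ [x _ <-]; rewrite h2E; case: ifP => _; [right; by exists (L x)|by left].
Qed.
HB.instance Definition _ := @FiniteImage.Build X R h2 h2_fin.
Lemma h2_ge0 x : 0 <= h2 x.
Proof. by rewrite h2E; case: ifP. Qed.
HB.instance Definition _ := @isNonNegFun.Build X R h2 h2_ge0.
Definition h2n : {nnsfun X >-> R} := h2.
End h2.

Section transfer.
Context {d} {X : measurableType d} {R : realType}.
Local Open Scope ereal_scope.

Lemma transfer_le (mu nu : {measure set X -> \bar R}) (F : set X) (L : X -> X)
  (f g : X -> \bar R) :
  measurable F -> measurable_fun F L ->
  (forall A, measurable A -> nu A = mu (F `&` L @^-1` A)) ->
  (forall x, 0 <= f x) -> (forall x, 0 <= g x) ->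
  (forall x, F x -> f (L x) <= g x) ->
  \int[nu]_x f x <= \int[mu]_x g x.
Proof.
move=> mF mL hnu f0 g0 fg.
rewrite ge0_integralTE// ge0_integralTE//.
apply: ge_ereal_sup => _ [h /= hf <-].
have -> : sintegral nu h = sintegral mu (@h2n _ _ _ F mF L mL h).
  rewrite !sintegralEnnsfun; apply: eq_fsbigr => r; rewrite inE /= => r0.
  congr (_ * _); rewrite hnu; last exact: measurable_sfunP.
  congr (mu _); apply/seteqP; split => x /=.
    by move=> [Fx hx]; rewrite h2E mem_set.
  rewrite h2E; case: ifPn => [/[!inE] Fx hx|_ hr]; first by split.
  by move: r0; rewrite -hr ltxx.
apply: ereal_sup_ubound => /=; exists (@h2n _ _ _ F mF L mL h) => // x.
rewrite /= h2E; case: ifPn => [/[!inE] Fx|_]; last exact: g0.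
exact: le_trans (hf _) (fg _ Fx).
Qed.
End transfer.

Section diraceval.
Context {d} {X : measurableType d} {R : realType}.
Local Open Scope ereal_scope.
Lemma dirac_eval (y : X) (f : X -> \bar R) : measurable [set y] ->
  (forall x, 0 <= f x) -> \int[@dirac _ X y R]_x f x = f y.
Proof.
move=> my f0.
have hd : forall A, measurable A -> @dirac _ X y R A = @dirac _ X y R ([set y] `&` id @^-1` A).
  move=> A mA; rewrite !diracE; congr (_%:E).
  by case: (pselect (A y)) => Ay; [rewrite !mem_set|rewrite !memNset//; case].
have cE : \int[@dirac _ X y R]_x (cst (f y)) x = f y.
  by rewrite integral_cst//= diracE mem_set// mule1.
apply/le_anti/andP; split.
  rewrite -[leRHS]cE; apply: (transfer_le _ _ _ _ _ _ my (@measurable_id _ _ _) hd) => [x|x|x ->]; [exact: f0|exact: f0|exact: lexx].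
rewrite -[leLHS]cE; apply: (transfer_le _ _ _ _ _ _ my (@measurable_id _ _ _) hd) => [x|x|x ->]; [exact: f0|exact: f0|exact: lexx].
Qed.
End diraceval.

Section topo.
Lemma open_borel {X : ptopologicalType} (A : set X) : open A -> borel_set A.
Proof. by move=> oA; apply: sub_sigma_algebra. Qed.

Lemma closed_borel {X : ptopologicalType} (A : set X) : closed A -> borel_set A.
Proof.
move=> cA; rewrite -[A]setCK; apply: (@measurableC _ (borel X)).
by apply: open_borel; exact: closed_openC.
Qed.

Lemma within_measurable {X Y : ptopologicalType} (D : set X) (f : X -> Y) :
  borel_set D -> {within D, continuous f} ->
  measurable_fun (D : set (borel X)) (f : borel X -> borel Y).
Proof.
move=> mD /continuousP cf.
apply: (@measurability _ _ (borel X) (borel Y) D f (@open Y) erefl).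
move=> _ [B oB <-]; have /open_subspaceP [V oV VD] := cf _ oB.
rewrite setIC -VD; apply: (@measurableI _ (borel X)) => //.
exact: open_borel.
Qed.

Lemma within_comp {X Y Z : topologicalType} (A : set Y) (B : set X)
  (f : Y -> Z) (k : X -> Y) :
  {within A, continuous f} -> continuous k -> (forall z, B z -> A (k z)) ->
  {within B, continuous (f \o k)}.
Proof.
move=> /subspace_continuousP hf ck hAB; apply/subspace_continuousP => x Bx W /=.
move=> /(hf _ (hAB _ Bx)) hW.
rewrite /within /= in hW |- *.
change (\forall z \near x, B z -> W (f (k z))).
have h' : \forall z \near x, A (k z) -> W (f (k z)) := ck x _ hW.
by apply: filterS h' => z hz Bz; exact: hz (hAB _ Bz).
Qed.

Lemma within_compT {X Y Z : topologicalType} (A : set Y)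
  (f : Y -> Z) (k : X -> Y) :
  {within A, continuous f} -> continuous k -> (forall z, A (k z)) ->
  continuous (f \o k).
Proof.
move=> /subspace_continuousP hf ck hA x W /=.
move=> /(hf _ (hA x)) hW.
rewrite /within /= in hW.
change (\forall z \near x, W (f (k z))).
have h' : \forall z \near x, A (k z) -> W (f (k z)) := ck x _ hW.
by apply: filterS h' => z hz; exact: hz (hA _).
Qed.
End topo.

Lemma measure_conc {d} {X : measurableType d} {R : realType}
  (mu : {measure set X -> \bar R}) (A B : set X) :
  measurable A -> measurable B -> mu (~` B) = 0%E -> mu A = mu (A `&` B).
Proof.
move=> mA mB B0; rewrite (measureDI mu mA mB).
rewrite [X in (X + _)%E](_ : _ = 0%E); first by rewrite add0e.
apply/le_anti/andP; split; last exact: measure_ge0.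
rewrite -B0; apply: le_measure; rewrite ?inE.
- exact: measurableD.
- exact: measurableC.
- by move=> x [].
Qed.

Section groupoid.
Context {R : realType} {X : ptopologicalType} (gX : groupoid_data X).
Hypothesis hT : is_topological_groupoid gX.
Hypothesis hH : hausdorff_space X.
Local Notation r := (gr gX).
Local Notation dd := (gd gX).
Local Notation inv := (ginv gX).
Local Notation mul := (gmul gX).

Let gG : is_groupoid gX := hT.1.

Lemma g_rr x : r (r x) = r x.
Proof. by have [_ [_ [A1 _ _ _ _]]] := gG; have [] := A1 x I. Qed.
Lemma g_rd x : r (dd x) = dd x.
Proof. by have [_ [_ [A1 _ _ _ _]]] := gG; have [_ []] := A1 x I. Qed.
Lemma g_dr x : dd (r x) = r x.
Proof. by have [_ [_ [A1 _ _ _ _]]] := gG; have [_ [_ []]] := A1 x I. Qed.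
Lemma g_rmul x y : composable gX x y -> r (mul x y) = r x.
Proof. by have [_ [_ [_ A2 _ _ _]]] := gG => /(A2 x y I I) []. Qed.
Lemma g_assoc x y z : composable gX x y -> composable gX y z ->
  mul (mul x y) z = mul x (mul y z).
Proof. by have [_ [_ [_ _ A3 _ _]]] := gG; exact: A3. Qed.
Lemma g_lid x : mul (r x) x = x.
Proof. by have [_ [_ [_ _ _ A4 _]]] := gG; have [] := A4 x I. Qed.
Lemma g_rinv x : r (inv x) = dd x.
Proof. by have [_ [_ [_ _ _ _ A5]]] := gG; have [] := A5 x I. Qed.
Lemma g_dinv x : dd (inv x) = r x.
Proof. by have [_ [_ [_ _ _ _ A5]]] := gG; have [_ []] := A5 x I. Qed.
Lemma g_mulV x : mul x (inv x) = r x.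
Proof. by have [_ [_ [_ _ _ _ A5]]] := gG; have [_ [_ []]] := A5 x I. Qed.
Lemma g_Vmul x : mul (inv x) x = dd x.
Proof. by have [_ [_ [_ _ _ _ A5]]] := gG; have [_ [_ [_]]] := A5 x I. Qed.

Lemma transl s (B : set X) :
  mul s @` (B `&` rfiber gX (dd s)) = rfiber gX (r s) `&` mul (inv s) @^-1` B.
Proof.
apply/seteqP; split => [_ [a [Ba ra] <-]|a' [ra' Ba']].
  rewrite /rfiber /= in ra *.
  have csa : composable gX s a by rewrite /composable ra.
  split; first by rewrite /rfiber /= g_rmul.
  rewrite /= -g_assoc ?g_Vmul -?ra ?g_lid //.
  by rewrite /composable g_dinv.
rewrite /rfiber /= in ra' Ba'.
have c1 : composable gX (inv s) a' by rewrite /composable g_dinv ra'.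
exists (mul (inv s) a').
  by split => //; rewrite /rfiber /= g_rmul // g_rinv.
rewrite -g_assoc //; last by rewrite /composable g_rinv.
by rewrite g_mulV -ra' g_lid.
Qed.

Lemma cont_r : continuous r.
Proof.
have -> : r = (fun xy : X * X => mul xy.1 xy.2) \o (fun x => (x, inv x)).
  by apply/funext => x /=; rewrite g_mulV.
apply: (within_compT _ _ _ hT.2.1).
  move=> x; apply: cvg_pair; [exact: cvg_id|exact: hT.2.2].
by move=> z; rewrite /= /composable g_rinv.
Qed.

Lemma fiber_closed u : closed (rfiber gX u).
Proof.
have h1 : closed (r @^-1` [set u]) := preimage_closed (fun x _ => cont_r x)
  (@accessible_closed_set1 X (hausdorff_accessible hH) u).
exact: h1.
Qed.

Lemma fiber_borel u : borel_set (rfiber gX u).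
Proof. exact: (closed_borel _ (fiber_closed u)). Qed.

Lemma mul_measurable s :
  measurable_fun (rfiber gX (dd s) : set (borel X)) (mul s : borel X -> borel X).
Proof.
apply: within_measurable; first exact: fiber_borel.
apply: (within_comp _ _ _ (fun a => (s, a)) hT.2.1).
  move=> x; apply: cvg_pair; [exact: cvg_cst|exact: cvg_id].
by move=> z zr; rewrite /= /composable zr.
Qed.

Lemma trans_inv s a : r a = dd s -> r (mul s a) = r s /\ mul (inv s) (mul s a) = a.
Proof.
move=> ra; have csa : composable gX s a by rewrite /composable ra.
split; first by rewrite g_rmul.
rewrite -g_assoc ?g_Vmul -?ra ?g_lid //.
by rewrite /composable g_dinv.
Qed.

Lemma inv_trans s a' : r a' = r s ->
  r (mul (inv s) a') = dd s /\ mul s (mul (inv s) a') = a'.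
Proof.
move=> ra'; have c1 : composable gX (inv s) a' by rewrite /composable g_dinv ra'.
split; first by rewrite g_rmul // g_rinv.
rewrite -g_assoc //; last by rewrite /composable g_rinv.
by rewrite g_mulV -ra' g_lid.
Qed.

Local Open Scope ereal_scope.
Lemma haar_cv (lam : X -> {measure set (borel X) -> \bar R}) :
  is_left_haar_system gX lam -> forall s (f g : X -> \bar R),
  (forall x, 0 <= f x) -> (forall x, 0 <= g x) ->
  (forall a, r a = dd s -> f (mul s a) = g a) ->
  \int[lam (r s)]_x f x = \int[lam (dd s)]_x g x.
Proof.
move=> [conc _ linv _] s f g f0 g0 fg.
have mF1 := fiber_borel (dd s); have mF2 := fiber_borel (r s).
apply/le_anti/andP; split.
  apply: (transfer_le _ _ _ _ _ _ mF1 (mul_measurable s)) => //; last first.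
    by move=> x Fx; rewrite fg.
  move=> A mA.
  have mE := mul_measurable s mF1 _ mA.
  rewrite (linv s _ mE).
  have -> : mul s @` ((rfiber gX (dd s) `&` mul s @^-1` A) `&` rfiber gX (dd s))
      = A `&` rfiber gX (r s).
    apply/seteqP; split => [_ [a [[Fa Aa] _] <-]|a' [Aa' Fa']].
      by split => //; rewrite /rfiber /= (trans_inv _ _ Fa).1.
    have [h1 h2] := inv_trans _ _ Fa'.
    exists (mul (inv s) a'); last exact: h2.
    by split; [split => //; rewrite /preimage /= h2|].
  apply: measure_conc => //.
  by apply: conc; rewrite /units /= g_rr.
have := mul_measurable (inv s); rewrite g_dinv => mL.
apply: (transfer_le _ _ _ _ _ _ mF2 mL) => //; last first.
  by move=> x Fx; have [h1 h2] := inv_trans _ _ Fx; rewrite -fg // h2.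
move=> B mB.
by rewrite (linv s _ mB) transl.
Qed.

End groupoid.


Theorem proposition4p4 (R : realType) (S G T : ptopologicalType)
  (gS : groupoid_data S) (lamS : S -> {measure set (borel S) -> \bar R})
  (muS : {measure set (borel S) -> \bar R})
  (gG : groupoid_data G) (lamG : G -> {measure set (borel G) -> \bar R})
  (muG : {measure set (borel G) -> \bar R})
  (gT : groupoid_data T) (lamT : T -> {measure set (borel T) -> \bar R})
  (muT : {measure set (borel T) -> \bar R})
  (p : S -> G) (q : T -> G) :
  haar_groupoid gS lamS muS ->
  haar_groupoid gG lamG muG ->
  haar_groupoid gT lamT muT ->
  haar_hom gS lamS muS gG lamG muG p ->
  haar_hom gT lamT muT gG lamG muG q ->
  forall (x : S * G * T) (E : set (S * G * T)),
    wp_set gG p q x ->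
    E `<=` wp_set gG p q ->
    (exists B : set (S * G * T), borel_set B /\ E = wp_set gG p q `&` B) ->
    let P := wp_groupoid gS gG gT p q in
    wp_lam lamS lamT (gd P x) E =
    wp_lam lamS lamT (gr P x)
      (gmul P x @` (E `&` wp_rfiber gS gG gT p q (gd P x))).
Proof.
move=> [[_ _ hHS hTS] [hLS _ _ _]] [[_ _ hHG _] _] [[_ _ hHT hTT] [hLT _ _ _]] _ _.
case=> [[s g] t] E _ hEw _ P.
rewrite /wp_lam /=.
set m := wp_mid gG p q (s, g, t).
set F := gmul P (s, g, t) @` _.
have mg : forall y : G, measurable ([set y] : set (borel G)).
  move=> y; apply: closed_borel.
  exact: (@accessible_closed_set1 G (hausdorff_accessible hHG) y).
have i0 : forall (A : set (S * G * T)) z, (0 <= (\1_A z)%:E :> \bar R)%E.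
  by move=> A z; rewrite indicE lee_fin ler0n.
symmetry.
apply: (haar_cv gS hTS hHS lamS hLS).
- by move=> a; apply: integral_ge0 => h _; apply: integral_ge0.
- by move=> a; apply: integral_ge0 => h _; apply: integral_ge0.
move=> a ra.
rewrite (@dirac_eval _ (borel G) R g); [|exact: mg|by move=> h; apply: integral_ge0].
rewrite (@dirac_eval _ (borel G) R m); [|exact: mg|by move=> h; apply: integral_ge0].
apply: (haar_cv gT hTT hHT lamT hLT) => // b rb.
have hiff : F (gmul gS s a, g, gmul gT t b) <-> E (a, m, b).
  split.
    move=> [[[a0 h0] b0] [Ez [_ rz]] ez].
    rewrite /rfiber /= in rz; case: rz => ra0 hm rb0.
    case: ez => ea eb.
    have [_ ha0] := trans_inv gS hTS s a0 ra0.
    have [_ ha] := trans_inv gS hTS s a ra.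
    have [_ hb0] := trans_inv gT hTT t b0 rb0.
    have [_ hb] := trans_inv gT hTT t b rb.
    by rewrite -ha -hb -ea -eb ha0 hb0 -hm.
  move=> Eamb; exists (a, m, b) => //.
  split => //; split; first exact: hEw.
  by rewrite /rfiber /= ra rb.
case: (pselect (E (a, m, b))) => hE.
  by rewrite !indicE !mem_set //; apply/hiff.
rewrite !indicE !memNset //; by move/hiff.
Qed.
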